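(* Let $Q$ be a compact metric space, $p_0:Q\to[0,+\infty]$ a function which is not identically $+\infty$, $c:Q\times Q\to[0,+\infty)$ continuous with $c(x,x)=0$ for all $x$, and $f$ a nonnegative Radon measure on $Q$. Let $\mathcal A=\{p:Q\to\overline{\mathbb{R}}\ :\ p\le p_0 \text{ on } Q,\ p \text{ lower semicontinuous on } Q\}$. Then the problem $\max\{F(p)\ :\ p\in\mathcal A\}$ admits a solution $p_{opt}$, where $$F(p)=\int_Q\Big(\max_{y\in T_p(x)}p(y)\Big)\,df(x).$$
   Context: For $p\in\mathcal A$ and $x\in Q$: $v_p(x)=\min_{y\in Q}\{c(x,y)+p(y)\}$ and $T_p(x)=\{y\in Q\ :\ c(x,y)+p(y)=v_p(x)\}$ (the set of locations where a customer living at $x$ optimally buys). The integrand $\max_{y\in T_p(x)}p(y)$ corresponds to the tie-breaking rule that a customer at $x$ chooses, among optimal locations, one maximizing price (equivalently minimizing $c(x,\cdot)$ on $T_p(x)$). *)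

(* Defs.v *)
From HB Require Import structures.
From mathcomp Require Import all_boot all_order all_algebra.
From mathcomp Require Import all_classical all_reals all_analysis.
Set Implicit Arguments. Unset Strict Implicit. Unset Printing Implicit Defensive.
Import Order.TTheory GRing.Theory Num.Theory.
Import numFieldNormedType.Exports.
Local Open Scope classical_set_scope.
Local Open Scope ring_scope.
Local Open Scope ereal_scope.

Notation borelQ Q := (g_sigma_algebraType (@open Q)).

Section Market.
Context {R : realType} {Q : pseudoPMetricType R}.

Definition vp (c : Q -> Q -> R) (p : Q -> \bar R) (x : Q) : \bar R :=
  ereal_inf [set (c x y)%:E + p y | y in [set: Q]].

Definition Tp (c : Q -> Q -> R) (p : Q -> \bar R) (x : Q) : set Q :=
  [set y | (c x y)%:E + p y = vp c p x].

Definition maxpT (c : Q -> Q -> R) (p : Q -> \bar R) (x : Q) : \bar R :=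
  ereal_sup [set p y | y in Tp c p x].

Definition admissible (p0 p : Q -> \bar R) : Prop :=
  lower_semicontinuous p /\ (forall x, p x <= p0 x).

Definition Fobj (f : {measure set (borelQ Q) -> \bar R}) (c : Q -> Q -> R)
  (p : Q -> \bar R) : \bar R :=
  \int[f]_(x in [set: borelQ Q]) maxpT c p x.

End Market.

(* Main.v *)
Require Import Defs.
From HB Require Import structures.
From mathcomp Require Import all_boot all_order all_algebra.
From mathcomp Require Import all_classical all_reals all_analysis.
From mathcomp Require Import measurable_realfun lra.
Set Implicit Arguments. Unset Strict Implicit. Unset Printing Implicit Defensive.
Import Order.TTheory GRing.Theory Num.Theory.
Import numFieldNormedType.Exports.
Local Open Scope classical_set_scope.
Local Open Scope ring_scope.

Lemma int_mono d (T : measurableType d) (R : realType) (mu : {measure set T -> \bar R})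
  (D : set T) (f1 f2 : T -> \bar R) : (forall x, (f1 x <= f2 x)%E) ->
  (\int[mu]_(x in D) f1 x <= \int[mu]_(x in D) f2 x)%E.
Proof.
move=> H; rewrite /integral; apply: leeB.
  apply: ereal_sup_le => _ [h Hh <-]; exists h => // x; apply: (le_trans (Hh x)).
  by apply: (@funepos_le _ _ setT) => //; [move=> y _; rewrite /patch; case: ifP|rewrite in_setT].
apply: ereal_sup_le => _ [h Hh <-]; exists h => // x; apply: (le_trans (Hh x)).
by apply: (@funeneg_le _ _ setT) => //; [move=> y _; rewrite /patch; case: ifP|rewrite in_setT].
Qed.

Section T.
Context {R : realType} {Q : pseudoPMetricType R}.
Hypothesis cQ : compact [set: Q].

Lemma cluster_seq (W : set (Q -> R)) (lo hi : R) (qn : nat -> Q -> R) :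
  (forall n, W (qn n)) -> (forall q y, W q -> lo <= q y <= hi) ->
  (forall y (e : R), 0 < e -> \forall y' \near y, forall q, W q -> `|q y - q y'| < e) ->
  exists qs : Q -> R, forall (e : R), 0 < e -> forall N, exists n,
    (N <= n)%N /\ forall y, `|qs y - qn n y| < e.
Proof.
move=> Wn Wb Wec.
have pp : pointwise_precompact W id.
  move=> x; apply: (@precompact_subset _ _ `[lo, hi]).
    by move=> _ [q Wq <-]; rewrite /= in_itv /=; exact: Wb.
  by apply: compact_precompact; [exact: Rhausdorff| exact: segment_compact].
have ec : equicontinuous W id.
  move=> x E; rewrite -entourage_from_ballE => -[e /= e0 sE].
  by apply: filterS (Wec x e e0) => y H i Wi; apply: sE; rewrite /= -ball_normE /=; exact: H.
have pc := @pointwise_precompact_equicontinuous Q R (@Rhausdorff R) W pp ec.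
rewrite precompactE in pc.
pose F : set_system {family compact, Q -> R} := qn @ \oo.
have PF : ProperFilter F by exact: fmap_proper_filter.
have FW : F (closure (W : set {family compact, Q -> R})).
  by exists 0%N => // n _ /=; apply: subset_closure; exact: Wn.
have [qs [_ cl]] := pc F PF FW.
exists qs => e e0 N.
have nb := @fam_nbhs Q R compact [set: Q] [set xy | ball xy.1 e xy.2] qs
  (entourage_ball _ (PosNum e0)) cQ.
have FN : F [set g | exists2 n, (N <= n)%N & g = qn n].
  by exists N => // n Nn /=; exists n.
have [g [[n Nn ->] Hg]] := cl _ _ FN nb.
exists n; split => // y; have := Hg y I.
by rewrite /= -ball_normE.
Qed.
Lemma small_inv (d : R) : 0 < d -> forall k, (Num.Def.archi_bound d^-1 <= k)%N ->
  k.+1%:R^-1 < d.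
Proof.
move=> d0 k Kk.
have ie : (0 <= d^-1)%R by rewrite invr_ge0 ltW.
have h1 := archi_boundP ie.
have h2 : (d^-1 < k.+1%:R)%R.
  by apply: lt_le_trans h1 _; rewrite ler_nat; apply: leq_trans Kk (leqnSn _).
by rewrite -[d in (_ < d)%R]invrK ltf_pV2 // posrE ?invr_gt0 // ltr0n.
Qed.

Lemma inv_mono (k n : nat) : (k <= n)%N -> n.+1%:R^-1 <= k.+1%:R^-1 :> R.
Proof. by move=> kn; rewrite lef_pV2 ?posrE ?ltr0n // ler_nat ltnS. Qed.

Local Open Scope ereal_scope.

Lemma einf_lim (u : (\bar R)^nat) : limn_einf u = ereal_sup (range (einfs u)).
Proof. by rewrite limn_einf_lim; apply: cvg_lim => //; exact: cvg_einfs_sup. Qed.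

Lemma einf_ge (u : (\bar R)^nat) (a : R) : (forall e : R, (0 < e)%R -> exists K,
  forall k, (K <= k)%N -> ((a - e)%:E <= u k)) -> a%:E <= limn_einf u.
Proof.
move=> H; rewrite einf_lim; apply/lee_subgt0Pr => e e0.
have [K HK] := H e e0.
apply: le_trans (ereal_sup_ubound _) ; last by exists K.
apply: le_ereal_inf_tmp => _ [k /= Kk <-]; rewrite -EFinB; exact: HK.
Qed.

Lemma einf_le (u : (\bar R)^nat) (b : R) :
  (forall k, u k <= (b + k.+1%:R^-1)%:E) -> limn_einf u <= b%:E.
Proof.
move=> H; rewrite einf_lim; apply: ge_ereal_sup => _ [n _ <-].
apply/lee_addgt0Pr => e e0.
pose m := maxn n (Num.Def.archi_bound e^-1).
have ie : (0 <= e^-1)%R by rewrite invr_ge0 ltW.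
have h1 := archi_boundP ie.
have h2 : (e^-1 < m.+1%:R)%R.
  apply: lt_le_trans h1 _; rewrite ler_nat /m; apply: leq_trans (leqnSn _).
  exact: leq_maxr.
have h3 : (m.+1%:R^-1 < e)%R.
  by rewrite -[e in (_ < e)%R]invrK ltf_pV2 // posrE ?invr_gt0 // ltr0n.
apply: (@le_trans _ _ (u m)).
  by apply: ereal_inf_lbound; exists m => //=; exact: leq_maxl.
apply: le_trans (H m) _; by rewrite -EFinD lee_fin lerD2l ltW.
Qed.

End T.


Section S.
Context {R : realType} {Q : pseudoPMetricType R}.
Hypothesis cQ : compact [set: Q].
Variable c : Q -> Q -> R.
Hypothesis c_cont : continuous (fun xy : Q * Q => c xy.1 xy.2).
Hypothesis c_ge0 : forall x y, 0 <= c x y.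
Hypothesis c_diag : forall x, c x x = 0.

Lemma unif1 x (e : R) : 0 < e -> \forall x' \near x, forall y, `|c x' y - c x y| < e.
Proof.
move=> e0.
have := compact_near_coveringP [set: Q]; case=> /(_ cQ) H _.
have := H Q (nbhs x) (fun x' y => `|c x' y - c x y| < e) _.
move=> /(_ _ _) /filterS; apply; first by move=> z Hz y; exact: Hz.
move=> y _.
have := @c_cont (x, y).
move/cvgrPdist_lt => /(_ (e/2)) /=; rewrite divr_gt0// => /(_ isT).
case=> [[A B] /= [nA nB] sAB].
exists (B, A) => //=; case=> y' x' /= [By' Ax'].
have h1 := sAB (x', y') (conj Ax' By').
have h2 := sAB (x, y') (conj (nbhs_singleton nA) By').
rewrite /= in h1 h2.
rewrite (splitr e).
apply: le_lt_trans (ltrD h1 h2).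
rewrite distrC (distrC (c x y)).
rewrite (_ : c x y' - c x' y' = - ((c x' y' - c x y) + (c x y - c x y'))).
  by rewrite normrN; exact: ler_normD.
by rewrite addrA subrK opprB.
Qed.

Lemma unif2 y (e : R) : 0 < e -> \forall y' \near y, forall x, `|c x y' - c x y| < e.
Proof.
move=> e0.
have := compact_near_coveringP [set: Q]; case=> /(_ cQ) H _.
have := H Q (nbhs y) (fun y' x => `|c x y' - c x y| < e) _.
move=> /(_ _ _) /filterS; apply; first by move=> z Hz x; exact: Hz.
move=> x _.
have := @c_cont (x, y).
move/cvgrPdist_lt => /(_ (e/2)) /=; rewrite divr_gt0// => /(_ isT).
case=> [[A B] /= [nA nB] sAB].
exists (A, B) => //=; case=> x' y' /= [Ax' By'].
have h1 := sAB (x', y') (conj Ax' By').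
have h2 := sAB (x', y) (conj Ax' (nbhs_singleton nB)).
rewrite /= in h1 h2.
rewrite (splitr e).
apply: le_lt_trans (ltrD h1 h2).
rewrite (_ : c x' y' - c x' y = (c x y - c x' y) - (c x y - c x' y')).
  by apply: (le_trans (ler_normB _ _)); rewrite addrC.
by lra.
Qed.

Definition EC (q : Q -> R) := forall y y' (e : R),
  (forall x, `|c x y - c x y'| <= e) -> `|q y - q y'| <= e.

Lemma EC_cont q : EC q -> continuous q.
Proof.
move=> Hq y; apply/cvgrPdist_lt => e e0.
have := unif2 y (divr_gt0 e0 (ltr0n _ 2)).
apply: filterS => y' Hy'.
apply: le_lt_trans (Hq y y' (e/2) _) _; last by lra.
by move=> x; rewrite distrC; apply/ltW/Hy'.
Qed.

Lemma cx_cont x : continuous (c x).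
Proof.
move=> y; apply/cvgrPdist_lt => e e0.
have := unif2 y e0; apply: filterS => y' Hy'.
by rewrite distrC; exact: Hy'.
Qed.

Lemma minim q x : continuous q -> exists y0, forall y, c x y0 + q y0 <= c x y + q y.
Proof.
move=> Hq.
have [|||y0 _ H] := @compact_EVT_min Q R (fun y => c x y + q y) [set: Q].
- by exists x.
- exact: cQ.
- by apply: continuous_subspaceT => y; apply: cvgD; [exact: cx_cont|exact: Hq].
by exists y0 => y; apply: H; rewrite in_setT.
Qed.

Local Notation E q := (fun y => (q y)%:E).

Lemma vp_min (q : Q -> R) x y0 : (forall y, c x y0 + q y0 <= c x y + q y) ->
  vp c (E q) x = (c x y0 + q y0)%:E.
Proof.
move=> H; apply/eqP; rewrite eq_le; apply/andP; split.
  by apply: ereal_inf_lbound; exists y0.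
by apply: le_ereal_inf_tmp => _ [y _ <-]; rewrite -EFinD lee_fin; exact: H.
Qed.

Lemma Tp_min (q : Q -> R) x y : Tp c (E q) x y -> forall z, c x y + q y <= c x z + q z.
Proof.
rewrite /Tp /= => H z; rewrite -lee_fin EFinD H.
by apply: ereal_inf_lbound; exists z.
Qed.

Lemma min_Tp (q : Q -> R) x y : (forall z, c x y + q y <= c x z + q z) -> Tp c (E q) x y.
Proof. by move=> H; rewrite /Tp /= (vp_min H). Qed.

Lemma G1 (p : Q -> \bar R) x y : (maxpT c p x <= (c x y)%:E + p y)%E.
Proof.
apply: ge_ereal_sup => _ [z Hz <-]; rewrite /Tp /= in Hz.
apply: (@le_trans _ _ ((c x z)%:E + p z)%E).
  by apply: lee_paddl => //; rewrite lee_fin.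
by rewrite Hz; apply: ereal_inf_lbound; exists y.
Qed.

Lemma keyK (q : Q -> R) x (a' a : R) : continuous q -> a' < a ->
  (forall y, (forall z, c x y + q y <= c x z + q z) -> q y <= a') ->
  exists2 d : R, 0 < d & \forall x' \near x, forall q' : Q -> R,
    (forall y, `|q' y - q y| < d) ->
    forall y', (forall z, c x' y' + q' y' <= c x' z + q' z) -> q' y' <= a.
Proof.
move=> Hq aa' Hmin.
have [y0 Hy0] := minim x Hq.
pose m := c x y0 + q y0.
pose b := (a' + a) / 2.
have [eta eta0 Heta] : exists2 eta : R, 0 < eta &
    forall y, b <= q y -> eta <= c x y + q y - m.
  pose K := [set y | b <= q y].
  have cK : compact K.
    apply: (subclosed_compact _ cQ) => //.
    rewrite (_ : K = q @^-1` [set r | b <= r]); last by [].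
    by move/continuous_closedP : Hq; apply; exact: closed_ge.
  have [[y1 Ky1]|K0] := pselect (K !=set0); last first.
    by exists 1 => // y Hy; exfalso; apply: K0; exists y.
  have [|||z1 Kz1 Hz1] := @compact_EVT_min Q R (fun y => c x y + q y - m) K.
  - by exists y1.
  - exact: cK.
  - apply: continuous_subspaceT => y; apply: cvgB; last exact: cvg_cst.
    by apply: cvgD; [exact: cx_cont|exact: Hq].
  rewrite inE in Kz1.
  exists (c x z1 + q z1 - m).
    rewrite lt_neqAle; apply/andP; split; last by have := Hy0 z1; rewrite /m; lra.
    apply/negP => /eqP Heq.
    have Hz1min : forall z, c x z1 + q z1 <= c x z + q z.
      by move=> z; have := Hy0 z; rewrite /m in Heq; lra.
    have := Hmin z1 Hz1min; rewrite /K /b /= in Kz1 => h; lra.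
  by move=> y Hy; apply: Hz1; rewrite inE.
exists (Num.min (eta / 4) (a - b)).
  by rewrite lt_min divr_gt0 //= /b; lra.
have := unif1 x (divr_gt0 eta0 (ltr0n _ 4)).
apply: filterS => x' Hx' q' Hq' y' Hy'.
rewrite leNgt; apply/negP => Hgt.
have dle1 : Num.min (eta / 4) (a - b) <= eta / 4 by rewrite ge_min lexx.
have dle2 : Num.min (eta / 4) (a - b) <= a - b by rewrite ge_min lexx orbT.
set d := Num.min _ _ in Hq' dle1 dle2.
have h1 := Hq' y'; have h2 := Hq' y0.
have h3 := Hx' y'; have h4 := Hx' y0.
rewrite ltr_norml in h1; rewrite ltr_norml in h2.
rewrite ltr_norml in h3; rewrite ltr_norml in h4.
case/andP: h1 => h1 h1'; case/andP: h2 => h2 h2'.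
case/andP: h3 => h3 h3'; case/andP: h4 => h4 h4'.
have hb : b <= q y' by lra.
have := Heta y' hb.
have := Hy' y0.
rewrite /m; lra.
Qed.

Definition gq (q : Q -> R) := maxpT c (E q).

Lemma gq_ge (q : Q -> R) x y0 : (forall z, c x y0 + q y0 <= c x z + q z) ->
  ((q y0)%:E <= gq q x)%E.
Proof. by move=> H; apply: ereal_sup_ubound; exists y0 => //; exact: min_Tp. Qed.

Lemma gq_le (q : Q -> R) x : (gq q x <= (q x)%:E)%E.
Proof. by have := G1 (E q) x x; rewrite c_diag add0e. Qed.

Lemma gq_real (q : Q -> R) x : continuous q -> exists r : R, gq q x = r%:E /\
   (exists y0, q y0 <= r) /\ r <= q x.
Proof.
move=> Hq; have [y0 Hy0] := minim x Hq.
have lower := gq_ge Hy0; have upper := gq_le q x.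
move: lower upper; case: (gq q x) => [s| |] //= l u.
by exists s; split => //; split; [exists y0; rewrite -lee_fin | rewrite -lee_fin].
Qed.

Lemma gK (q : Q -> R) x (a : R) : continuous q -> (gq q x < a%:E)%E ->
  exists2 d : R, 0 < d & \forall x' \near x, forall q' : Q -> R,
    (forall y, `|q' y - q y| < d) -> (gq q' x' <= a%:E)%E.
Proof.
move=> Hq Hlt.
have [r [Hr _]] := gq_real x Hq.
rewrite Hr lte_fin in Hlt.
have [|d d0 Hd] := @keyK q x r a Hq Hlt.
  by move=> y Hy; rewrite -lee_fin -Hr; exact: gq_ge.
exists d => //; apply: filterS Hd => x' H q' Hq'.
apply: ge_ereal_sup => _ [y' Hy' <-]; rewrite lee_fin.
by apply: H => //; exact: Tp_min.
Qed.

Lemma gq_open (q : Q -> R) (a : R) : continuous q -> open [set x | (gq q x < a%:E)%E].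
Proof.
move=> Hq; rewrite openE => x /= Hx.
have [r [Hr _]] := gq_real x Hq.
rewrite Hr lte_fin in Hx.
have [|d d0 Hd] := @gK q x ((r + a)/2) Hq.
  by rewrite Hr lte_fin; lra.
rewrite /interior; apply: filterS Hd => x' H.
apply: (le_lt_trans (H q _)); first by move=> y; rewrite subrr normr0.
by rewrite lte_fin; lra.
Qed.

Lemma gq_meas (q : Q -> R) : continuous q ->
  measurable_fun [set: borelQ Q] (fun x : borelQ Q => gq q x).
Proof.
move=> Hq; apply: (measurability _ (ErealGenInftyO.measurableE R)).
move=> _ [_ [a ->] <-]; rewrite setTI preimage_itvNyo.
by apply: sub_sigma_algebra; exact: gq_open.
Qed.

Lemma lsc_lb (p : Q -> \bar R) : lower_semicontinuous p ->
  (forall y, (-oo < p y)%E) -> exists N : R, forall y, (N%:E < p y)%E.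
Proof.
move=> Hp Hfin.
have := compact_near_coveringP [set: Q]; case=> /(_ cQ) H _.
suff : \forall n \near \oo, [set: Q] `<=` (fun y => ((- n%:R)%:E < p y)%E).
  by case=> n _ Hn; exists (- n%:R) => y; exact: (Hn n (leqnn n) y).
apply: (H nat \oo (fun n y => ((- n%:R)%:E < p y)%E)) => y _.
have [n0 Hn0] : exists n0 : nat, ((- n0%:R)%:E < p y)%E.
  move: (Hfin y); case: (p y) => [r| |] // _.
    exists (Num.Def.archi_bound `|r|); rewrite lte_fin.
    have h1 := archi_boundP (normr_ge0 r).
    have h2 : - r <= `|r| by rewrite -normrN; exact: ler_norm.
    lra.
  by exists 0%N; rewrite ltry.
have [V nV HV] := Hp y _ Hn0.
exists (V, [set n | (n0 <= n)%N]); first by split => //; exists n0.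
case=> y' n /= [Vy' n0n].
apply: le_lt_trans (HV y' Vy'); rewrite lee_fin lerN2 ler_nat.
exact: n0n.
Qed.

Definition Cset (p0 : Q -> \bar R) (L M : R) (q : Q -> R) :=
  [/\ forall y, ((q y)%:E <= p0 y)%E, forall y, L <= q y <= M & EC q].

Definition q0 : Q -> R := fun=> 0.

Lemma gq0_ge0 x : (0%:E <= gq q0 x)%E.
Proof.
have := @gq_ge q0 x x; rewrite /q0; rewrite c_diag; apply => z.
by rewrite !addr0 c_ge0.
Qed.

Lemma vp_lb (p : Q -> \bar R) x y : (vp c p x <= (c x y)%:E + p y)%E.
Proof. by apply: ereal_inf_lbound; exists y. Qed.

Lemma reduce (p0 : Q -> \bar R) y0 (P0 Cm : R) (f : {measure set (borelQ Q) -> \bar R}) :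
  (forall y, (0 <= p0 y)%E) -> p0 y0 = P0%:E -> (forall x y, c x y <= Cm) ->
  forall p, admissible p0 p -> exists q, Cset p0 (-(Cm+1)) (Cm + P0) q /\
    (Fobj f c p <= Fobj f c (E q))%E.
Proof.
move=> p0ge0 Hy0 Hc p [Hlsc Hle].
have Cm0 : 0 <= Cm by have := Hc y0 y0; rewrite c_diag.
have P00 : 0 <= P0 by rewrite -lee_fin -Hy0.
have zeroC : Cset p0 (-(Cm+1)) (Cm+P0) q0.
  split => [y|y|y y' e H] /=; first exact: p0ge0.
    by rewrite /q0; apply/andP; split; lra.
  by rewrite /q0 subrr normr0; apply: le_trans (H y0); exact: normr_ge0.
have bad : (forall x, (maxpT c p x <= gq q0 x)%E) ->
    exists q, Cset p0 (-(Cm+1)) (Cm + P0) q /\ (Fobj f c p <= Fobj f c (E q))%E.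
  by move=> H; exists q0; split => //; exact: int_mono.
have [[y1 Hy1]|Hfin] := pselect (exists y1, p y1 = -oo%E).
  apply: bad => x; apply: (le_trans (G1 p x y1)); rewrite Hy1 addeNy; exact: leNye.
have Hfin' : forall y, (-oo < p y)%E.
  by move=> y; rewrite ltNye; apply/eqP => H; apply: Hfin; exists y.
have [N HN] := lsc_lb Hlsc Hfin'.
have [r0 [pr0 r0P]] : exists r, p y0 = r%:E /\ r <= P0.
  move: (Hfin' y0) (Hle y0); rewrite Hy0; case: (p y0) => [r| |] //= _.
  by rewrite lee_fin => h; exists r.
have vfin : forall x, exists r, vp c p x = r%:E /\ N <= r <= Cm + P0.
  move=> x.
  have l : (N%:E <= vp c p x)%E.
    apply: le_ereal_inf_tmp => _ [y _ <-]; apply: le_trans (ltW (HN y)) _.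
    by apply: lee_paddl => //; rewrite lee_fin.
  have u : (vp c p x <= (Cm + P0)%:E)%E.
    apply: le_trans (vp_lb p x y0) _; rewrite pr0 -EFinD lee_fin.
    by have := Hc x y0; lra.
  move: l u; case: (vp c p x) => [r| |] //= l u.
  by exists r; split => //; rewrite -!lee_fin l u.
have [u Hu] := choice vfin.
have ubd : forall x, N <= u x <= Cm + P0 by move=> x; case: (Hu x).
have Hux : forall x, vp c p x = (u x)%:E by move=> x; case: (Hu x).
pose q y := sup [set u x - c x y | x in [set: Q]].
have qub : forall y, has_ubound [set u x - c x y | x in [set: Q]].
  move=> y; exists (Cm + P0) => _ [x _ <-].
  by have := ubd x; have := c_ge0 x y => h /andP[h1 h2]; lra.
have qne : forall y, [set u x - c x y | x in [set: Q]] !=set0.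
  by move=> y; exists (u y - c y y); exists y.
have qge : forall x y, u x - c x y <= q y.
  by move=> x y; apply: ub_le_sup => //; exists x.
have qle : forall y (b : R), (forall x, u x - c x y <= b) -> q y <= b.
  by move=> y b H; apply: ge_sup => // _ [x _ <-]; exact: H.
have qp : forall y, ((q y)%:E <= p y)%E.
  move=> y; have := Hfin' y; case E: (p y) => [r| |] // _; last exact: leey.
  rewrite lee_fin; apply: qle => x.
  have := vp_lb p x y; rewrite Hux E -EFinD lee_fin; lra.
have ECq : EC q.
  move=> y y' e H.
  have a1 : q y <= q y' + e.
    apply: qle => x; have := qge x y'; have := H x; rewrite ler_norml.
    by case/andP => h1 h2 h3; lra.
  have a2 : q y' <= q y + e.
    apply: qle => x; have := qge x y; have := H x; rewrite ler_norml.
    by case/andP => h1 h2 h3; lra.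
  by rewrite ler_norml; apply/andP; split; lra.
have gpq : forall x, (maxpT c p x <= gq q x)%E.
  move=> x; apply: ge_ereal_sup => _ [z Hz <-].
  rewrite /Tp /= Hux in Hz.
  have pz : p z = (u x - c x z)%:E.
    move: Hz; case: (p z) => [r| |] //= Hz.
    move/eqP: Hz; rewrite -EFinD eqe => /eqP Hz.
    by congr (_%:E); lra.
  have qz : q z = u x - c x z.
    apply/eqP; rewrite eq_le qge andbT -lee_fin -pz; exact: qp.
  rewrite pz -qz; apply: gq_ge => w; rewrite qz.
  by have := qge x w; lra.
have [[y2 Hy2]|Hnot] := pselect (exists y2, q y2 < -(Cm+1)).
  apply: bad => x; apply: (le_trans (gpq x)); apply: (le_trans (G1 (E q) x y2)).
  apply: le_trans (gq0_ge0 x); rewrite -EFinD lee_fin.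
  by have := Hc x y2; lra.
exists q; split; last exact: int_mono.
split => //.
  by move=> y; apply: le_trans (qp y) (Hle y).
move=> y; apply/andP; split.
  by rewrite leNgt; apply/negP => h; apply: Hnot; exists y.
apply: qle => x; have := ubd x; have := c_ge0 x y => h /andP[h1 h2]; lra.
Qed.

Lemma best (p0 : Q -> \bar R) (L M : R)
  (f : {finite_measure set (borelQ Q) -> \bar R}) :
  Cset p0 L M q0 ->
  exists qs, Cset p0 L M qs /\
    forall q, Cset p0 L M q -> (Fobj f c (E q) <= Fobj f c (E qs))%E.
Proof.
move=> C0.
have Ccont : forall q, Cset p0 L M q -> continuous q.
  by move=> q [_ _ H]; exact: EC_cont.
have gbnd : forall q, Cset p0 L M q -> forall x, exists r, gq q x = r%:E /\ L <= r <= M.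
  move=> q Cq x; have [r [Hr [[y0 Hy0] Hrx]]] := gq_real x (Ccont q Cq).
  case: Cq => _ Hb _; have := Hb y0; have := Hb x.
  by case/andP => h1 h2 /andP[h3 h4]; exists r; split => //; apply/andP; split; lra.
have gint : forall q, Cset p0 L M q -> f.-integrable [set: borelQ Q] (fun x => gq q x).
  move=> q Cq.
  apply: (@le_integrable _ _ _ f [set: borelQ Q] measurableT _
     (EFin \o cst (`|L| + `|M|)) (gq_meas (Ccont q Cq))); last first.
    exact: finite_measure_integrable_cst.
  move=> x _; have [r [-> /andP[h1 h2]]] := gbnd q Cq x.
  rewrite /comp /cst.
  rewrite !abse_EFin lee_fin [X in _ <= X]ger0_norm ?addr_ge0 // ler_norml.
  have hL := ler_norm L; have hM := ler_norm M.
  have hL' : - L <= `|L| by rewrite -normrN; exact: ler_norm.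
  have hM' : - M <= `|M| by rewrite -normrN; exact: ler_norm.
  by apply/andP; split; lra.
have ffin : f [set: borelQ Q] \is a fin_num by exact: fin_num_measure.
pose fQ := fine (f [set: borelQ Q]).
have fQE : (f : {measure set (borelQ Q) -> \bar R}) [set: borelQ Q] = fQ%:E.
  by rewrite /fQ fineK.
have fQ0 : 0 <= fQ by rewrite -lee_fin -fQE; exact: measure_ge0.
have Ffin : forall q, Cset p0 L M q -> exists t, Fobj f c (E q) = t%:E.
  move=> q Cq; have := integrable_fin_num measurableT (gint q Cq) => h.
  by exists (fine (Fobj f c (E q))); rewrite fineK.
have Fub : forall q, Cset p0 L M q -> (Fobj f c (E q) <= (M * fQ)%:E)%E.
  move=> q Cq; rewrite /Fobj.
  have H : forall x, (maxpT c (E q) x <= cst M%:E x)%E.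
    move=> x; have [r [Hr /andP[_ h]]] := gbnd q Cq x.
    by rewrite /gq in Hr; rewrite Hr /= lee_fin.
  apply: le_trans (int_mono f [set: borelQ Q] H) _.
  by rewrite integral_cst // EFinM fQE.
have F0 : (0 <= Fobj f c (E q0))%E.
  by apply: integral_ge0 => x _; exact: gq0_ge0.
pose S := ereal_sup [set Fobj f c (E q) | q in Cset p0 L M].
have [s Ss] : exists s, S = s%:E.
  have h1 : (Fobj f c (E q0) <= S)%E by apply: ereal_sup_ubound; exists q0.
  have h2 : (S <= (M * fQ)%:E)%E by apply: ge_ereal_sup => _ [q Cq <-]; exact: Fub.
  move: h1 h2; case: S => [t| |] //=.
    by move=> _ _; exists t.
  by move=> /(le_trans F0).
have maxseq : forall n : nat, exists q, Cset p0 L M q /\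
    ((s - n.+1%:R^-1)%:E < Fobj f c (E q))%E.
  move=> n; have : ((s - n.+1%:R^-1)%:E < S)%E.
    by rewrite Ss lte_fin ltrBlDr ltrDl invr_gt0 ltr0n.
  by case/ereal_sup_gt => _ [q Cq <-] H; exists q.
have [qn Hqn] := choice maxseq.
have Wec : forall y (e : R), 0 < e -> \forall y' \near y, forall q,
    Cset p0 L M q -> `|q y - q y'| < e.
  move=> y e e0; apply: filterS (unif2 y (divr_gt0 e0 (ltr0n _ 2))) => y' H q [_ _ ECq].
  apply: le_lt_trans (ECq y y' (e/2) _) _; last by lra.
  by move=> x; rewrite distrC; exact/ltW/H.
have [qs Hap] := @cluster_seq _ _ cQ (Cset p0 L M) L M qn (fun n => (Hqn n).1)
  (fun q y Cq => let: And3 _ h _ := Cq in h y) Wec.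
have Cs : Cset p0 L M qs.
  split.
  - move=> y; apply/lee_addgt0Pr => e e0; have [n [_ Hn]] := Hap e e0 0%N.
    have := Hn y; rewrite ltr_norml => /andP[h1 h2].
    case: (Hqn n).1 => Hp _ _.
    apply: (@le_trans _ _ ((qn n y)%:E + e%:E)); last exact: leeD2r.
    by rewrite -EFinD lee_fin; lra.
  - move=> y; apply/andP; split.
      apply/ler_addgt0Pr => e e0; have [n [_ Hn]] := Hap e e0 0%N.
      have := Hn y; rewrite ltr_norml => /andP[h1 h2].
      by case: (Hqn n).1 => _ /(_ y) /andP[h3 h4] _; lra.
    apply/ler_addgt0Pr => e e0; have [n [_ Hn]] := Hap e e0 0%N.
    have := Hn y; rewrite ltr_norml => /andP[h1 h2].
    by case: (Hqn n).1 => _ /(_ y) /andP[h3 h4] _; lra.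
  - move=> y y' e H; apply/ler_addgt0Pr => e' e0.
    have [n [_ Hn]] := Hap (e'/2) (divr_gt0 e0 (ltr0n _ 2)) 0%N.
    case: (Hqn n).1 => _ _ /(_ y y' e H) h3.
    have := Hn y; have := Hn y'; rewrite !ltr_norml => /andP[h1 h2] /andP[h4 h5].
    move: h3; rewrite !ler_norml => /andP[h6 h7].
    by apply/andP; split; lra.
have Hk : forall k, exists n, (k <= n)%N /\
    forall y, `|qs y - qn n y| < k.+1%:R^-1.
  by move=> k; apply: Hap; rewrite invr_gt0 ltr0n.
have [phi Hphi] := choice Hk.
pose h k x := (M%:E - gq (qn (phi k)) x)%E.
have mh : forall k, measurable_fun [set: borelQ Q] (h k).
  move=> k; apply: emeasurable_funB; first exact: measurable_cst.
  exact: gq_meas (Ccont _ (Hqn (phi k)).1).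
have h0 : forall k x, [set: borelQ Q] x -> (0 <= h k x)%E.
  move=> k x _; rewrite /h; have [r [-> /andP[_ hr]]] := gbnd _ (Hqn (phi k)).1 x.
  by rewrite -EFinB lee_fin subr_ge0.
have fat := fatou f measurableT mh h0.
have [Fs HFs] := Ffin qs Cs.
have HFs' : (\int[f]_(x in [set: borelQ Q]) gq qs x = Fs%:E)%E by exact: HFs.
have intM : f.-integrable [set: borelQ Q] (fun _ => M%:E).
  exact: finite_measure_integrable_cst.
have intC : (\int[f]_(x in [set: borelQ Q]) M%:E = (M * fQ)%:E)%E.
  by have := integral_cst f measurableT M%:E; rewrite /cst => ->; rewrite fQE.
have lower : ((M * fQ - Fs)%:E <= \int[f]_(x in [set: borelQ Q]) limn_einf (h^~ x))%E.
  have -> : ((M * fQ - Fs)%:E = \int[f]_(x in [set: borelQ Q]) (M%:E - gq qs x))%E.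
    by rewrite integralB //; [rewrite intC HFs' | exact: gint].
  apply: int_mono => x.
  have [r [Hr _]] := gbnd qs Cs x; rewrite Hr -EFinB; apply: einf_ge => e e0.
  have [|d d0 Hd] := @gK qs x (r + e) (Ccont qs Cs); first by rewrite Hr lte_fin; lra.
  have Hd' := nbhs_singleton Hd.
  exists (Num.Def.archi_bound d^-1) => k Kk.
  have Hg : (gq (qn (phi k)) x <= (r + e)%:E)%E.
    apply: Hd' => y; rewrite distrC; apply: lt_trans ((Hphi k).2 y) _.
    exact: small_inv.
  have [r' [Hr' _]] := gbnd _ (Hqn (phi k)).1 x.
  rewrite /= /h Hr' -EFinB lee_fin; rewrite Hr' lee_fin in Hg; lra.
have upper : (limn_einf (fun n => \int[f]_(x in [set: borelQ Q]) h n x) <= (M * fQ - s)%:E)%E.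
  apply: einf_le => k.
  have [t Ht] := Ffin _ (Hqn (phi k)).1.
  have Ht' : (\int[f]_(x in [set: borelQ Q]) gq (qn (phi k)) x = t%:E)%E by exact: Ht.
  rewrite /h integralB //; last exact: gint (Hqn (phi k)).1.
  rewrite intC Ht' -EFinB lee_fin.
  have := (Hqn (phi k)).2; rewrite Ht lte_fin; have := @inv_mono R _ _ (Hphi k).1.
  move: (M * fQ) ((phi k).+1%:R^-1) (k.+1%:R^-1) => MF a b; lra.
have := le_trans lower (le_trans fat upper); rewrite lee_fin => HH.
exists qs; split => // q Cq.
apply: (@le_trans _ _ S); first by apply: ereal_sup_ubound; exists q.
by rewrite Ss HFs lee_fin; move: (M * fQ) HH => MF; lra.
Qed.

End S.




Local Open Scope ereal_scope.

Theorem mainTheorem3 (R : realType) (Q : pseudoPMetricType R)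
  (hQ : hausdorff_space Q) (cQ : compact [set: Q])
  (p0 : Q -> \bar R) (p0_ge0 : forall x, 0 <= p0 x)
  (p0_fin : exists x, p0 x != +oo)
  (c : Q -> Q -> R) (c_cont : continuous (fun xy : Q * Q => c xy.1 xy.2))
  (c_ge0 : forall x y, (0 <= c x y)%R) (c_diag : forall x, c x x = 0%R)
  (f : {finite_measure set (borelQ Q) -> \bar R}) :
  exists popt : Q -> \bar R, admissible p0 popt /\
    forall p : Q -> \bar R, admissible p0 p -> Fobj f c p <= Fobj f c popt.
Proof.
have [y0 Hy0] := p0_fin.
have [P0 HP0] : exists P0 : R, p0 y0 = P0%:E.
  move: Hy0 (p0_ge0 y0); case: (p0 y0) => [r| |] // _ _; by exists r.
have [Cm HCm] : exists Cm : R, forall x y, (c x y <= Cm)%R.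
  have [||| z _ Hz] := @compact_EVT_max (Q * Q)%type R (fun xy => c xy.1 xy.2)
     ([set: Q] `*` [set: Q]).
  - by exists (y0, y0).
  - exact: compact_setX.
  - exact: continuous_subspaceT.
  by exists (c z.1 z.2) => x y; apply: (Hz (x, y)); rewrite inE.
have Cm0 : (0 <= Cm)%R by have := HCm y0 y0; rewrite c_diag.
have P00 : (0 <= P0)%R by rewrite -lee_fin -HP0.
have C0 : Cset c p0 (- (Cm + 1)) (Cm + P0) q0.
  split => [y|y|y y' e H] /=; first exact: p0_ge0.
    by rewrite /q0; apply/andP; split; lra.
  by rewrite /q0 subrr normr0; apply: le_trans (H y0); exact: normr_ge0.
have [qs [Cs Hbest]] := best cQ c_cont c_ge0 c_diag f C0.
exists (fun y => (qs y)%:E); split.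
  split; last by case: Cs.
  apply/lower_semicontinuousP => a.
  have : continuous qs by case: Cs => _ _ H; exact: (EC_cont cQ c_cont).
  move/continuousP => /(_ _ (@open_gt _ a)).
  by congr open; apply/seteqP; split => x /=; rewrite lte_fin.
move=> p Hp.
have [q [Cq Hq]] := reduce cQ c_ge0 c_diag f p0_ge0 HP0 HCm Hp.
exact: le_trans Hq (Hbest q Cq).
Qed.
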